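(* Let $K$ be the $2$-uniform tiling of the plane whose vertex types are $[3^2,4^1,3^1,4^1]$ and $[3^1,4^1,6^1,4^1]$. If $X$ is a map on the torus that is a quotient $X=K/\Gamma$ of $K$, then the vertices of $X$ form at most $6$ orbits under ${\rm Aut}(X)$.
   Context: A map is a polyhedral map: a cellular embedding of a connected graph in a closed surface such that the intersection of any two distinct faces is empty, a single vertex, or a single edge. For a vertex $u$, the faces containing $u$ form a cyclic sequence (the face-cycle at $u$); if this cyclic sequence consists of consecutive blocks of $n_1$ $p_1$-gons, then $n_2$ $p_2$-gons, ..., then $n_k$ $p_k$-gons, with cyclically consecutive $p_i$ distinct, then $u$ is said to have type $[p_1^{n_1},\dots,p_k^{n_k}]$ (defined up to cyclic shift and reversal). A $2$-uniform tiling is an edge-to-edge tiling of the Euclidean plane $\mathbb{R}^2$ by regular polygons whose symmetry group has exactly two orbits on the set of vertices; viewed as a map on the plane, its vertices have (at most) two types, listed as $[W;Z]$. (Up to isomorphism there are exactly $20$ such tilings; there is exactly one with the vertex types named in the claim.) For a map $K$ on the plane, a quotient of $K$ on the torus is a map $X$ on the torus together with a polyhedral covering map $\eta:K\to X$ with $X=K/\Gamma$, where $\Gamma\le {\rm Aut}(K)$ is a subgroup acting without fixed vertices, edges or faces and $K/\Gamma$ is homeomorphic to the torus. ${\rm Aut}(X)$ denotes the automorphism group of the map $X$, acting on its vertex set $V(X)$. *)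

(* Defs.v *)
From HB Require Import structures.
From mathcomp Require Import all_boot all_order all_fingroup all_algebra.
From Stdlib Require Import Relations.
Set Implicit Arguments.
Unset Strict Implicit.
Unset Printing Implicit Defensive.

(*  Maps are encoded combinatorially by their flag systems: a set of flags    *)
(*  Phi with three involutions r0 (change vertex, keep edge & face),          *)
(*  r1 (change edge, keep vertex & face), r2 (change face, keep vertex &      *)
(*  edge).  Vertices = <r1,r2>-orbits, edges = <r0,r2>-orbits,                 *)
(*  faces = <r0,r1>-orbits of flags.                                          *)

(*  Geometrically: the 3.12.12 tiling in which every regular 12-gon is        *)
(*  dissected into a central hexagon, 6 squares and 6 triangles; the          *)
(*  12-gons centred at the lattice Z v1 + Z v2 share edges, and the           *)
(*  remaining gaps are triangles.  One fundamental cell: 12 vertices          *)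
(*  (6 of type 3.4.6.4, 6 of type 3^2.4.3.4), 27 edges, 15 faces              *)
(*  (1 hexagon, 6 squares, 8 triangles), 108 flags.                           *)
(*  A flag of K is (a, b, k): local flag k translated by a v1 + b v2.         *)
(*
(*   Local vertices of the fundamental cell (coordinates in the Euclidean plane,
     with lattice basis v1 = (2+sqrt3, 0), v2 = ((2+sqrt3)/2, (2+sqrt3)sqrt3/2)):
       vertex  0 : (1.000000, 0.000000)
       vertex  1 : (0.500000, 0.866025)
       vertex  2 : (-0.500000, 0.866025)
       vertex  3 : (-1.000000, 0.000000)
       vertex  4 : (-0.500000, -0.866025)
       vertex  5 : (0.500000, -0.866025)
       vertex  6 : (1.866025, 0.500000)
       vertex  7 : (0.500000, 1.866025)
       vertex  8 : (-1.366025, 1.366025)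
       vertex  9 : (-1.866025, -0.500000)
       vertex 10 : (-0.500000, -1.866025)
       vertex 11 : (1.366025, -1.366025)
     Faces of the fundamental cell, as cyclic lists of vertices (a,b,i) =
     local vertex i translated by a*v1 + b*v2:
       face  0 (6-gon) : (0,0,0) (0,0,1) (0,0,2) (0,0,3) (0,0,4) (0,0,5)
       face  1 (4-gon) : (0,0,0) (0,0,1) (0,1,10) (0,0,6)
       face  2 (4-gon) : (0,0,1) (0,0,2) (-1,1,11) (0,0,7)
       face  3 (4-gon) : (0,0,2) (0,0,3) (-1,0,6) (0,0,8)
       face  4 (4-gon) : (0,0,3) (0,0,4) (0,-1,7) (0,0,9)
       face  5 (4-gon) : (0,0,4) (0,0,5) (1,-1,8) (0,0,10)
       face  6 (4-gon) : (0,0,5) (0,0,0) (1,0,9) (0,0,11)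
       face  7 (3-gon) : (0,0,0) (0,0,6) (1,0,9)
       face  8 (3-gon) : (0,0,1) (0,0,7) (0,1,10)
       face  9 (3-gon) : (0,0,2) (0,0,8) (-1,1,11)
       face 10 (3-gon) : (0,0,3) (0,0,9) (-1,0,6)
       face 11 (3-gon) : (0,0,4) (0,0,10) (0,-1,7)
       face 12 (3-gon) : (0,0,5) (0,0,11) (1,-1,8)
       face 13 (3-gon) : (0,0,6) (1,0,8) (0,1,10)
       face 14 (3-gon) : (0,0,7) (0,1,9) (-1,1,11)
     Local flags k = 0..107 (face, position i, side s): the flag consists of the
     i-th vertex of the face cycle, the edge from it to the next (s=0) or previous
     (s=1) vertex of the cycle, and the face:
       0:(0,0,0) 1:(0,0,1) 2:(0,1,0) 3:(0,1,1) 4:(0,2,0) 5:(0,2,1) 6:(0,3,0) 7:(0,3,1)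
       8:(0,4,0) 9:(0,4,1) 10:(0,5,0) 11:(0,5,1) 12:(1,0,0) 13:(1,0,1) 14:(1,1,0) 15:(1,1,1)
       16:(1,2,0) 17:(1,2,1) 18:(1,3,0) 19:(1,3,1) 20:(2,0,0) 21:(2,0,1) 22:(2,1,0) 23:(2,1,1)
       24:(2,2,0) 25:(2,2,1) 26:(2,3,0) 27:(2,3,1) 28:(3,0,0) 29:(3,0,1) 30:(3,1,0) 31:(3,1,1)
       32:(3,2,0) 33:(3,2,1) 34:(3,3,0) 35:(3,3,1) 36:(4,0,0) 37:(4,0,1) 38:(4,1,0) 39:(4,1,1)
       40:(4,2,0) 41:(4,2,1) 42:(4,3,0) 43:(4,3,1) 44:(5,0,0) 45:(5,0,1) 46:(5,1,0) 47:(5,1,1)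
       48:(5,2,0) 49:(5,2,1) 50:(5,3,0) 51:(5,3,1) 52:(6,0,0) 53:(6,0,1) 54:(6,1,0) 55:(6,1,1)
       56:(6,2,0) 57:(6,2,1) 58:(6,3,0) 59:(6,3,1) 60:(7,0,0) 61:(7,0,1) 62:(7,1,0) 63:(7,1,1)
       64:(7,2,0) 65:(7,2,1) 66:(8,0,0) 67:(8,0,1) 68:(8,1,0) 69:(8,1,1) 70:(8,2,0) 71:(8,2,1)
       72:(9,0,0) 73:(9,0,1) 74:(9,1,0) 75:(9,1,1) 76:(9,2,0) 77:(9,2,1) 78:(10,0,0) 79:(10,0,1)
       80:(10,1,0) 81:(10,1,1) 82:(10,2,0) 83:(10,2,1) 84:(11,0,0) 85:(11,0,1) 86:(11,1,0) 87:(11,1,1)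
       88:(11,2,0) 89:(11,2,1) 90:(12,0,0) 91:(12,0,1) 92:(12,1,0) 93:(12,1,1) 94:(12,2,0) 95:(12,2,1)
       96:(13,0,0) 97:(13,0,1) 98:(13,1,0) 99:(13,1,1) 100:(13,2,0) 101:(13,2,1) 102:(14,0,0) 103:(14,0,1)
       104:(14,1,0) 105:(14,1,1) 106:(14,2,0) 107:(14,2,1)
*)
*)
(*  Table entries (da, db, k') for r_i applied to local flag k, with the      *)
(*  translation offsets stored shifted by one: (da,db) = (x-1, y-1).          *)

Definition r0tab : seq (nat * nat * nat) :=
[::
  (1, 1, 3); (1, 1, 10); (1, 1, 5); (1, 1, 0); (1, 1, 7); (1, 1, 2);
  (1, 1, 9); (1, 1, 4); (1, 1, 11); (1, 1, 6); (1, 1, 1); (1, 1, 8);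
  (1, 1, 15); (1, 1, 18); (1, 1, 17); (1, 1, 12); (1, 1, 19); (1, 1, 14);
  (1, 1, 13); (1, 1, 16); (1, 1, 23); (1, 1, 26); (1, 1, 25); (1, 1, 20);
  (1, 1, 27); (1, 1, 22); (1, 1, 21); (1, 1, 24); (1, 1, 31); (1, 1, 34);
  (1, 1, 33); (1, 1, 28); (1, 1, 35); (1, 1, 30); (1, 1, 29); (1, 1, 32);
  (1, 1, 39); (1, 1, 42); (1, 1, 41); (1, 1, 36); (1, 1, 43); (1, 1, 38);
  (1, 1, 37); (1, 1, 40); (1, 1, 47); (1, 1, 50); (1, 1, 49); (1, 1, 44);
  (1, 1, 51); (1, 1, 46); (1, 1, 45); (1, 1, 48); (1, 1, 55); (1, 1, 58);
  (1, 1, 57); (1, 1, 52); (1, 1, 59); (1, 1, 54); (1, 1, 53); (1, 1, 56);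
  (1, 1, 63); (1, 1, 64); (1, 1, 65); (1, 1, 60); (1, 1, 61); (1, 1, 62);
  (1, 1, 69); (1, 1, 70); (1, 1, 71); (1, 1, 66); (1, 1, 67); (1, 1, 68);
  (1, 1, 75); (1, 1, 76); (1, 1, 77); (1, 1, 72); (1, 1, 73); (1, 1, 74);
  (1, 1, 81); (1, 1, 82); (1, 1, 83); (1, 1, 78); (1, 1, 79); (1, 1, 80);
  (1, 1, 87); (1, 1, 88); (1, 1, 89); (1, 1, 84); (1, 1, 85); (1, 1, 86);
  (1, 1, 93); (1, 1, 94); (1, 1, 95); (1, 1, 90); (1, 1, 91); (1, 1, 92);
  (1, 1, 99); (1, 1, 100); (1, 1, 101); (1, 1, 96); (1, 1, 97); (1, 1, 98);
  (1, 1, 105); (1, 1, 106); (1, 1, 107); (1, 1, 102); (1, 1, 103); (1, 1, 104) ].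

Definition r1tab : seq (nat * nat * nat) :=
[::
  (1, 1, 1); (1, 1, 0); (1, 1, 3); (1, 1, 2); (1, 1, 5); (1, 1, 4);
  (1, 1, 7); (1, 1, 6); (1, 1, 9); (1, 1, 8); (1, 1, 11); (1, 1, 10);
  (1, 1, 13); (1, 1, 12); (1, 1, 15); (1, 1, 14); (1, 1, 17); (1, 1, 16);
  (1, 1, 19); (1, 1, 18); (1, 1, 21); (1, 1, 20); (1, 1, 23); (1, 1, 22);
  (1, 1, 25); (1, 1, 24); (1, 1, 27); (1, 1, 26); (1, 1, 29); (1, 1, 28);
  (1, 1, 31); (1, 1, 30); (1, 1, 33); (1, 1, 32); (1, 1, 35); (1, 1, 34);
  (1, 1, 37); (1, 1, 36); (1, 1, 39); (1, 1, 38); (1, 1, 41); (1, 1, 40);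
  (1, 1, 43); (1, 1, 42); (1, 1, 45); (1, 1, 44); (1, 1, 47); (1, 1, 46);
  (1, 1, 49); (1, 1, 48); (1, 1, 51); (1, 1, 50); (1, 1, 53); (1, 1, 52);
  (1, 1, 55); (1, 1, 54); (1, 1, 57); (1, 1, 56); (1, 1, 59); (1, 1, 58);
  (1, 1, 61); (1, 1, 60); (1, 1, 63); (1, 1, 62); (1, 1, 65); (1, 1, 64);
  (1, 1, 67); (1, 1, 66); (1, 1, 69); (1, 1, 68); (1, 1, 71); (1, 1, 70);
  (1, 1, 73); (1, 1, 72); (1, 1, 75); (1, 1, 74); (1, 1, 77); (1, 1, 76);
  (1, 1, 79); (1, 1, 78); (1, 1, 81); (1, 1, 80); (1, 1, 83); (1, 1, 82);
  (1, 1, 85); (1, 1, 84); (1, 1, 87); (1, 1, 86); (1, 1, 89); (1, 1, 88);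
  (1, 1, 91); (1, 1, 90); (1, 1, 93); (1, 1, 92); (1, 1, 95); (1, 1, 94);
  (1, 1, 97); (1, 1, 96); (1, 1, 99); (1, 1, 98); (1, 1, 101); (1, 1, 100);
  (1, 1, 103); (1, 1, 102); (1, 1, 105); (1, 1, 104); (1, 1, 107); (1, 1, 106) ].

Definition r2tab : seq (nat * nat * nat) :=
[::
  (1, 1, 12); (1, 1, 55); (1, 1, 20); (1, 1, 15); (1, 1, 28); (1, 1, 23);
  (1, 1, 36); (1, 1, 31); (1, 1, 44); (1, 1, 39); (1, 1, 52); (1, 1, 47);
  (1, 1, 0); (1, 1, 60); (1, 1, 67); (1, 1, 3); (1, 1, 100); (1, 1, 70);
  (1, 1, 63); (1, 1, 97); (1, 1, 2); (1, 1, 66); (1, 1, 73); (1, 1, 5);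
  (1, 1, 106); (1, 1, 76); (1, 1, 69); (1, 1, 103); (1, 1, 4); (1, 1, 72);
  (1, 1, 79); (1, 1, 7); (0, 1, 96); (1, 1, 82); (1, 1, 75); (0, 1, 99);
  (1, 1, 6); (1, 1, 78); (1, 1, 85); (1, 1, 9); (1, 0, 102); (1, 1, 88);
  (1, 1, 81); (1, 0, 105); (1, 1, 8); (1, 1, 84); (1, 1, 91); (1, 1, 11);
  (1, 0, 98); (1, 1, 94); (1, 1, 87); (1, 0, 101); (1, 1, 10); (1, 1, 90);
  (1, 1, 61); (1, 1, 1); (2, 0, 104); (1, 1, 64); (1, 1, 93); (2, 0, 107);
  (1, 1, 13); (1, 1, 54); (2, 1, 83); (1, 1, 18); (1, 1, 57); (2, 1, 80);
  (1, 1, 21); (1, 1, 14); (1, 2, 89); (1, 1, 26); (1, 1, 17); (1, 2, 86);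
  (1, 1, 29); (1, 1, 22); (0, 2, 95); (1, 1, 34); (1, 1, 25); (0, 2, 92);
  (1, 1, 37); (1, 1, 30); (0, 1, 65); (1, 1, 42); (1, 1, 33); (0, 1, 62);
  (1, 1, 45); (1, 1, 38); (1, 0, 71); (1, 1, 50); (1, 1, 41); (1, 0, 68);
  (1, 1, 53); (1, 1, 46); (2, 0, 77); (1, 1, 58); (1, 1, 49); (2, 0, 74);
  (2, 1, 32); (1, 1, 19); (1, 2, 48); (2, 1, 35); (1, 1, 16); (1, 2, 51);
  (1, 2, 40); (1, 1, 27); (0, 2, 56); (1, 2, 43); (1, 1, 24); (0, 2, 59) ].

Definition flagK : Type := (int * int * 'I_108)%type.

Definition apply_tab (t : seq (nat * nat * nat)) (f : flagK) : flagK :=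
  let: (a, b, k) := f in
  let: (x, y, k') := nth (1%N, 1%N, 0%N) t k in
  ((a + x%:Z - 1)%R, (b + y%:Z - 1)%R, inord k').

Definition r0K : flagK -> flagK := apply_tab r0tab.
Definition r1K : flagK -> flagK := apply_tab r1tab.
Definition r2K : flagK -> flagK := apply_tab r2tab.

Definition sameV_K : relation flagK :=
  clos_refl_trans flagK (fun f g => g = r1K f \/ g = r2K f).
Definition sameE_K : relation flagK :=
  clos_refl_trans flagK (fun f g => g = r0K f \/ g = r2K f).
Definition sameF_K : relation flagK :=
  clos_refl_trans flagK (fun f g => g = r0K f \/ g = r1K f).

Definition is_autK (g : flagK -> flagK) : Prop :=
  bijective g /\
  (forall f, g (r0K f) = r0K (g f)) /\
  (forall f, g (r1K f) = r1K (g f)) /\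
  (forall f, g (r2K f) = r2K (g f)).

Definition subgroup_AutK (Gam : (flagK -> flagK) -> Prop) : Prop :=
  (forall g, Gam g -> is_autK g) /\
  Gam id /\
  (forall g h, Gam g -> Gam h -> Gam (g \o h)) /\
  (forall g, Gam g -> exists h, Gam h /\ cancel g h /\ cancel h g).

Definition acts_freely_on (R : relation flagK)
    (Gam : (flagK -> flagK) -> Prop) : Prop :=
  forall g, Gam g -> (exists f, R f (g f)) -> forall h, g h = h.

Record fmap := FMap {
  fl : finType;
  s0 : fl -> fl;
  s1 : fl -> fl;
  s2 : fl -> fl }.

Section FiniteMaps.
Variable X : fmap.

Definition vrel : rel (fl X) := fun x y => (y == s1 x) || (y == s2 x).
Definition erel : rel (fl X) := fun x y => (y == s0 x) || (y == s2 x).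
Definition frel_ : rel (fl X) := fun x y => (y == s0 x) || (y == s1 x).
Definition allrel_ : rel (fl X) :=
  fun x y => [|| y == s0 x, y == s1 x | y == s2 x].

Definition vertex_of (x : fl X) : {set fl X} := [set y | connect vrel x y].
Definition edge_of (x : fl X) : {set fl X} := [set y | connect erel x y].
Definition face_of (x : fl X) : {set fl X} := [set y | connect frel_ x y].

Definition verts : {set {set fl X}} := [set vertex_of x | x : fl X].
Definition edges : {set {set fl X}} := [set edge_of x | x : fl X].
Definition faces : {set {set fl X}} := [set face_of x | x : fl X].

Definition euler_char : int := (#|verts|%:Z - #|edges|%:Z + #|faces|%:Z)%R.

Definition connected_map : Prop := forall x y, connect allrel_ x y.

(* orientable: the flag graph is bipartite *)
Definition orientable : Prop :=
  exists c : fl X -> bool, forall x,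
    [/\ c (s0 x) != c x, c (s1 x) != c x & c (s2 x) != c x].

Definition on_torus : Prop :=
  connected_map /\ orientable /\ euler_char = 0%R.

Definition polyhedral : Prop :=
  forall F1 F2, F1 \in faces -> F2 \in faces -> F1 != F2 ->
  let CV := [set V in verts | (V :&: F1 != set0) && (V :&: F2 != set0)] in
  let CE := [set E in edges | (E :&: F1 != set0) && (E :&: F2 != set0)] in
  [|| (CV == set0) && (CE == set0),
      (#|CV| == 1%N) && (CE == set0)
    | [exists E in CE,
         (CE == [set E]) && (CV == [set V in verts | V :&: E != set0])]].

Definition AutX : {set {perm fl X}} :=
  [set p : {perm fl X} | [forall x,
     [&& p (s0 x) == s0 (p x), p (s1 x) == s1 (p x)
       & p (s2 x) == s2 (p x)]]].

Definition vorbit (V : {set fl X}) : {set {set fl X}} :=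
  [set [set (p : {perm fl X}) x | x in V] | p in AutX].

Definition n_vertex_orbits : nat := #|[set vorbit V | V in verts]|.

End FiniteMaps.

Definition is_quotient_of_K (Gam : (flagK -> flagK) -> Prop) (X : fmap)
    (eta : flagK -> fl X) : Prop :=
  (forall y, exists f, eta f = y) /\
  (forall f, eta (r0K f) = s0 (eta f)) /\
  (forall f, eta (r1K f) = s1 (eta f)) /\
  (forall f, eta (r2K f) = s2 (eta f)) /\
  (forall f g, eta f = eta g <-> exists h, Gam h /\ h f = g).
Arguments is_quotient_of_K : clear implicits.

(* Main.v *)
Require Import Defs.
From mathcomp Require Import all_boot all_order all_fingroup all_algebra.
From mathcomp Require Import ring zify.
From Stdlib Require Import Relations ClassicalEpsilon.
Set Implicit Arguments.
Unset Strict Implicit.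
Unset Printing Implicit Defensive.
Import GRing.Theory Num.Theory.
Definition RT1 : seq (int * int * nat) := [:: (Posz 0, Posz 0, 2); (Posz 0, Posz 0, 3); (Posz 0, Posz 0, 4); (Posz 0, Posz 0, 5); (Posz 0, Posz 0, 6); (Posz 0, Posz 0, 7); (Posz 0, Posz 0, 8); (Posz 0, Posz 0, 9); (Posz 0, Posz 0, 10); (Posz 0, Posz 0, 11); (Posz 0, Posz 0, 0); (Posz 0, Posz 0, 1); (Posz 0, Posz 0, 20); (Posz 0, Posz 0, 21); (Posz 0, Posz 0, 22); (Posz 0, Posz 0, 23); (Posz 0, Posz 0, 24); (Posz 0, Posz 0, 25); (Posz 0, Posz 0, 26); (Posz 0, Posz 0, 27); (Posz 0, Posz 0, 28); (Posz 0, Posz 0, 29); (Posz 0, Posz 0, 30); (Posz 0, Posz 0, 31); (Posz 0, Posz 0, 32); (Posz 0, Posz 0, 33); (Posz 0, Posz 0, 34); (Posz 0, Posz 0, 35); (Posz 0, Posz 0, 36); (Posz 0, Posz 0, 37); (Posz 0, Posz 0, 38); (Posz 0, Posz 0, 39); (Posz 0, Posz 0, 40); (Posz 0, Posz 0, 41); (Posz 0, Posz 0, 42); (Posz 0, Posz 0, 43); (Posz 0, Posz 0, 44); (Posz 0, Posz 0, 45); (Posz 0, Posz 0, 46); (Posz 0, Posz 0, 47); (Posz 0, Posz 0, 48); (Posz 0, Posz 0, 49); (Posz 0, Posz 0, 50); (Posz 0, Posz 0, 51); (Posz 0, Posz 0, 52); (Posz 0, Posz 0, 53); (Posz 0, Posz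 0, 54); (Posz 0, Posz 0, 55); (Posz 0, Posz 0, 56); (Posz 0, Posz 0, 57); (Posz 0, Posz 0, 58); (Posz 0, Posz 0, 59); (Posz 0, Posz 0, 12); (Posz 0, Posz 0, 13); (Posz 0, Posz 0, 14); (Posz 0, Posz 0, 15); (Posz 0, Posz 0, 16); (Posz 0, Posz 0, 17); (Posz 0, Posz 0, 18); (Posz 0, Posz 0, 19); (Posz 0, Posz 0, 66); (Posz 0, Posz 0, 67); (Posz 0, Posz 0, 68); (Posz 0, Posz 0, 69); (Posz 0, Posz 0, 70); (Posz 0, Posz 0, 71); (Posz 0, Posz 0, 72); (Posz 0, Posz 0, 73); (Posz 0, Posz 0, 74); (Posz 0, Posz 0, 75); (Posz 0, Posz 0, 76); (Posz 0, Posz 0, 77); (Posz 0, Posz 0, 78); (Posz 0, Posz 0, 79); (Posz 0, Posz 0, 80); (Posz 0, Posz 0, 81); (Posz 0, Posz 0, 82); (Posz 0, Posz 0, 83); (Posz 0, Posz 0, 84); (Posz 0, Posz 0, 85); (Posz 0, Posz 0, 86); (Posz 0, Posz 0, 87); (Posz 0, Posz 0, 88); (Posz 0, Posz 0, 89); (Posz 0, Posz 0, 90); (Posz 0, Posz 0, 91); (Posz 0, Posz 0, 92); (Posz 0, Posz 0, 93); (Posz 0, Posz 0, 94); (Posz 0, Posz 0, 95); (Posz 0, Posz 0, 60); (Posz 0, Posz 0, 61); (Posz 0, Posz 0, 62); (Posz 0, Posz 0, 63); (Posz 0, Posz 0, 64); (Posz 0, Posz 0, 65); (Posz 0, Posz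 0, 102); (Posz 0, Posz 0, 103); (Posz 0, Posz 0, 104); (Posz 0, Posz 0, 105); (Posz 0, Posz 0, 106); (Posz 0, Posz 0, 107); (Negz 0, Posz 0, 98); (Negz 0, Posz 0, 99); (Negz 0, Posz 0, 100); (Negz 0, Posz 0, 101); (Negz 0, Posz 0, 96); (Negz 0, Posz 0, 97)].
Definition RT2 : seq (int * int * nat) := [:: (Posz 0, Posz 0, 4); (Posz 0, Posz 0, 5); (Posz 0, Posz 0, 6); (Posz 0, Posz 0, 7); (Posz 0, Posz 0, 8); (Posz 0, Posz 0, 9); (Posz 0, Posz 0, 10); (Posz 0, Posz 0, 11); (Posz 0, Posz 0, 0); (Posz 0, Posz 0, 1); (Posz 0, Posz 0, 2); (Posz 0, Posz 0, 3); (Posz 0, Posz 0, 28); (Posz 0, Posz 0, 29); (Posz 0, Posz 0, 30); (Posz 0, Posz 0, 31); (Posz 0, Posz 0, 32); (Posz 0, Posz 0, 33); (Posz 0, Posz 0, 34); (Posz 0, Posz 0, 35); (Posz 0, Posz 0, 36); (Posz 0, Posz 0, 37); (Posz 0, Posz 0, 38); (Posz 0, Posz 0, 39); (Posz 0, Posz 0, 40); (Posz 0, Posz 0, 41); (Posz 0, Posz 0, 42); (Posz 0, Posz 0, 43); (Posz 0, Posz 0, 44); (Posz 0, Posz 0, 45); (Posz 0, Posz 0, 46); (Posz 0, Posz 0, 47); (Posz 0, Posz 0, 48); (Posz 0, Posz 0, 49); (Posz 0, Posz 0, 50); (Posz 0, Posz 0, 51); (Posz 0, Posz 0, 52); (Posz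 0, Posz 0, 53); (Posz 0, Posz 0, 54); (Posz 0, Posz 0, 55); (Posz 0, Posz 0, 56); (Posz 0, Posz 0, 57); (Posz 0, Posz 0, 58); (Posz 0, Posz 0, 59); (Posz 0, Posz 0, 12); (Posz 0, Posz 0, 13); (Posz 0, Posz 0, 14); (Posz 0, Posz 0, 15); (Posz 0, Posz 0, 16); (Posz 0, Posz 0, 17); (Posz 0, Posz 0, 18); (Posz 0, Posz 0, 19); (Posz 0, Posz 0, 20); (Posz 0, Posz 0, 21); (Posz 0, Posz 0, 22); (Posz 0, Posz 0, 23); (Posz 0, Posz 0, 24); (Posz 0, Posz 0, 25); (Posz 0, Posz 0, 26); (Posz 0, Posz 0, 27); (Posz 0, Posz 0, 72); (Posz 0, Posz 0, 73); (Posz 0, Posz 0, 74); (Posz 0, Posz 0, 75); (Posz 0, Posz 0, 76); (Posz 0, Posz 0, 77); (Posz 0, Posz 0, 78); (Posz 0, Posz 0, 79); (Posz 0, Posz 0, 80); (Posz 0, Posz 0, 81); (Posz 0, Posz 0, 82); (Posz 0, Posz 0, 83); (Posz 0, Posz 0, 84); (Posz 0, Posz 0, 85); (Posz 0, Posz 0, 86); (Posz 0, Posz 0, 87); (Posz 0, Posz 0, 88); (Posz 0, Posz 0, 89); (Posz 0, Posz 0, 90); (Posz 0, Posz 0, 91); (Posz 0, Posz 0, 92); (Posz 0, Posz 0, 93); (Posz 0, Posz 0, 94); (Posz 0, Posz 0, 95); (Posz 0, Posz 0, 60); (Posz 0, Posz 0, 61); (Posz 0, Posz 0, 62); (Posz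 0, Posz 0, 63); (Posz 0, Posz 0, 64); (Posz 0, Posz 0, 65); (Posz 0, Posz 0, 66); (Posz 0, Posz 0, 67); (Posz 0, Posz 0, 68); (Posz 0, Posz 0, 69); (Posz 0, Posz 0, 70); (Posz 0, Posz 0, 71); (Negz 0, Posz 0, 98); (Negz 0, Posz 0, 99); (Negz 0, Posz 0, 100); (Negz 0, Posz 0, 101); (Negz 0, Posz 0, 96); (Negz 0, Posz 0, 97); (Posz 0, Negz 0, 104); (Posz 0, Negz 0, 105); (Posz 0, Negz 0, 106); (Posz 0, Negz 0, 107); (Posz 0, Negz 0, 102); (Posz 0, Negz 0, 103)].
Definition RT3 : seq (int * int * nat) := [:: (Posz 0, Posz 0, 6); (Posz 0, Posz 0, 7); (Posz 0, Posz 0, 8); (Posz 0, Posz 0, 9); (Posz 0, Posz 0, 10); (Posz 0, Posz 0, 11); (Posz 0, Posz 0, 0); (Posz 0, Posz 0, 1); (Posz 0, Posz 0, 2); (Posz 0, Posz 0, 3); (Posz 0, Posz 0, 4); (Posz 0, Posz 0, 5); (Posz 0, Posz 0, 36); (Posz 0, Posz 0, 37); (Posz 0, Posz 0, 38); (Posz 0, Posz 0, 39); (Posz 0, Posz 0, 40); (Posz 0, Posz 0, 41); (Posz 0, Posz 0, 42); (Posz 0, Posz 0, 43); (Posz 0, Posz 0, 44); (Posz 0, Posz 0, 45); (Posz 0, Posz 0, 46); (Posz 0, Posz 0, 47); (Posz 0, Posz 0, 48); (Posz 0, Posz 0, 49); (Posz 0, Posz 0, 50); (Posz 0, Posz 0,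 51); (Posz 0, Posz 0, 52); (Posz 0, Posz 0, 53); (Posz 0, Posz 0, 54); (Posz 0, Posz 0, 55); (Posz 0, Posz 0, 56); (Posz 0, Posz 0, 57); (Posz 0, Posz 0, 58); (Posz 0, Posz 0, 59); (Posz 0, Posz 0, 12); (Posz 0, Posz 0, 13); (Posz 0, Posz 0, 14); (Posz 0, Posz 0, 15); (Posz 0, Posz 0, 16); (Posz 0, Posz 0, 17); (Posz 0, Posz 0, 18); (Posz 0, Posz 0, 19); (Posz 0, Posz 0, 20); (Posz 0, Posz 0, 21); (Posz 0, Posz 0, 22); (Posz 0, Posz 0, 23); (Posz 0, Posz 0, 24); (Posz 0, Posz 0, 25); (Posz 0, Posz 0, 26); (Posz 0, Posz 0, 27); (Posz 0, Posz 0, 28); (Posz 0, Posz 0, 29); (Posz 0, Posz 0, 30); (Posz 0, Posz 0, 31); (Posz 0, Posz 0, 32); (Posz 0, Posz 0, 33); (Posz 0, Posz 0, 34); (Posz 0, Posz 0, 35); (Posz 0, Posz 0, 78); (Posz 0, Posz 0, 79); (Posz 0, Posz 0, 80); (Posz 0, Posz 0, 81); (Posz 0, Posz 0, 82); (Posz 0, Posz 0, 83); (Posz 0, Posz 0, 84); (Posz 0, Posz 0, 85); (Posz 0, Posz 0, 86); (Posz 0, Posz 0, 87); (Posz 0, Posz 0, 88); (Posz 0, Posz 0, 89); (Posz 0, Posz 0, 90); (Posz 0, Posz 0, 91); (Posz 0, Posz 0, 92); (Posz 0, Posz 0, 93); (Posz 0, Posz 0, 94); (Posz 0, Posz 0,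 95); (Posz 0, Posz 0, 60); (Posz 0, Posz 0, 61); (Posz 0, Posz 0, 62); (Posz 0, Posz 0, 63); (Posz 0, Posz 0, 64); (Posz 0, Posz 0, 65); (Posz 0, Posz 0, 66); (Posz 0, Posz 0, 67); (Posz 0, Posz 0, 68); (Posz 0, Posz 0, 69); (Posz 0, Posz 0, 70); (Posz 0, Posz 0, 71); (Posz 0, Posz 0, 72); (Posz 0, Posz 0, 73); (Posz 0, Posz 0, 74); (Posz 0, Posz 0, 75); (Posz 0, Posz 0, 76); (Posz 0, Posz 0, 77); (Posz 0, Negz 0, 104); (Posz 0, Negz 0, 105); (Posz 0, Negz 0, 106); (Posz 0, Negz 0, 107); (Posz 0, Negz 0, 102); (Posz 0, Negz 0, 103); (Posz 0, Negz 0, 100); (Posz 0, Negz 0, 101); (Posz 0, Negz 0, 96); (Posz 0, Negz 0, 97); (Posz 0, Negz 0, 98); (Posz 0, Negz 0, 99)].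
Definition RT4 : seq (int * int * nat) := [:: (Posz 0, Posz 0, 8); (Posz 0, Posz 0, 9); (Posz 0, Posz 0, 10); (Posz 0, Posz 0, 11); (Posz 0, Posz 0, 0); (Posz 0, Posz 0, 1); (Posz 0, Posz 0, 2); (Posz 0, Posz 0, 3); (Posz 0, Posz 0, 4); (Posz 0, Posz 0, 5); (Posz 0, Posz 0, 6); (Posz 0, Posz 0, 7); (Posz 0, Posz 0, 44); (Posz 0, Posz 0, 45); (Posz 0, Posz 0, 46); (Posz 0, Posz 0, 47); (Posz 0, Posz 0, 48); (Posz 0, Posz 0, 49); (Posz 0, Posz 0, 50); (Posz 0, Posz 0, 51); (Posz 0, Posz 0, 52); (Posz 0, Posz 0, 53); (Posz 0, Posz 0, 54); (Posz 0, Posz 0, 55); (Posz 0, Posz 0, 56); (Posz 0, Posz 0, 57); (Posz 0, Posz 0, 58); (Posz 0, Posz 0, 59); (Posz 0, Posz 0, 12); (Posz 0, Posz 0, 13); (Posz 0, Posz 0, 14); (Posz 0, Posz 0, 15); (Posz 0, Posz 0, 16); (Posz 0, Posz 0, 17); (Posz 0, Posz 0, 18); (Posz 0, Posz 0, 19); (Posz 0, Posz 0, 20); (Posz 0, Posz 0, 21); (Posz 0, Posz 0, 22); (Posz 0, Posz 0, 23); (Posz 0, Posz 0, 24); (Posz 0, Posz 0, 25); (Posz 0, Posz 0, 26); (Posz 0, Posz 0, 27); (Posz 0, Posz 0, 28); (Posz 0, Posz 0, 29); (Posz 0, Posz 0, 30); (Posz 0, Posz 0, 31); (Posz 0, Posz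 0, 32); (Posz 0, Posz 0, 33); (Posz 0, Posz 0, 34); (Posz 0, Posz 0, 35); (Posz 0, Posz 0, 36); (Posz 0, Posz 0, 37); (Posz 0, Posz 0, 38); (Posz 0, Posz 0, 39); (Posz 0, Posz 0, 40); (Posz 0, Posz 0, 41); (Posz 0, Posz 0, 42); (Posz 0, Posz 0, 43); (Posz 0, Posz 0, 84); (Posz 0, Posz 0, 85); (Posz 0, Posz 0, 86); (Posz 0, Posz 0, 87); (Posz 0, Posz 0, 88); (Posz 0, Posz 0, 89); (Posz 0, Posz 0, 90); (Posz 0, Posz 0, 91); (Posz 0, Posz 0, 92); (Posz 0, Posz 0, 93); (Posz 0, Posz 0, 94); (Posz 0, Posz 0, 95); (Posz 0, Posz 0, 60); (Posz 0, Posz 0, 61); (Posz 0, Posz 0, 62); (Posz 0, Posz 0, 63); (Posz 0, Posz 0, 64); (Posz 0, Posz 0, 65); (Posz 0, Posz 0, 66); (Posz 0, Posz 0, 67); (Posz 0, Posz 0, 68); (Posz 0, Posz 0, 69); (Posz 0, Posz 0, 70); (Posz 0, Posz 0, 71); (Posz 0, Posz 0, 72); (Posz 0, Posz 0, 73); (Posz 0, Posz 0, 74); (Posz 0, Posz 0, 75); (Posz 0, Posz 0, 76); (Posz 0, Posz 0, 77); (Posz 0, Posz 0, 78); (Posz 0, Posz 0, 79); (Posz 0, Posz 0, 80); (Posz 0, Posz 0, 81); (Posz 0, Posz 0, 82); (Posz 0, Posz 0, 83); (Posz 0, Negz 0, 100); (Posz 0, Negz 0, 101); (Posz 0, Negz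 0, 96); (Posz 0, Negz 0, 97); (Posz 0, Negz 0, 98); (Posz 0, Negz 0, 99); (Posz 1, Negz 0, 106); (Posz 1, Negz 0, 107); (Posz 1, Negz 0, 102); (Posz 1, Negz 0, 103); (Posz 1, Negz 0, 104); (Posz 1, Negz 0, 105)].
Definition RT5 : seq (int * int * nat) := [:: (Posz 0, Posz 0, 10); (Posz 0, Posz 0, 11); (Posz 0, Posz 0, 0); (Posz 0, Posz 0, 1); (Posz 0, Posz 0, 2); (Posz 0, Posz 0, 3); (Posz 0, Posz 0, 4); (Posz 0, Posz 0, 5); (Posz 0, Posz 0, 6); (Posz 0, Posz 0, 7); (Posz 0, Posz 0, 8); (Posz 0, Posz 0, 9); (Posz 0, Posz 0, 52); (Posz 0, Posz 0, 53); (Posz 0, Posz 0, 54); (Posz 0, Posz 0, 55); (Posz 0, Posz 0, 56); (Posz 0, Posz 0, 57); (Posz 0, Posz 0, 58); (Posz 0, Posz 0, 59); (Posz 0, Posz 0, 12); (Posz 0, Posz 0, 13); (Posz 0, Posz 0, 14); (Posz 0, Posz 0, 15); (Posz 0, Posz 0, 16); (Posz 0, Posz 0, 17); (Posz 0, Posz 0, 18); (Posz 0, Posz 0, 19); (Posz 0, Posz 0, 20); (Posz 0, Posz 0, 21); (Posz 0, Posz 0, 22); (Posz 0, Posz 0, 23); (Posz 0, Posz 0, 24); (Posz 0, Posz 0, 25); (Posz 0, Posz 0, 26); (Posz 0, Posz 0, 27); (Posz 0, Posz 0, 28); (Posz 0, Posz 0, 29); (Posz 0, Posz 0, 30); (Posz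 0, Posz 0, 31); (Posz 0, Posz 0, 32); (Posz 0, Posz 0, 33); (Posz 0, Posz 0, 34); (Posz 0, Posz 0, 35); (Posz 0, Posz 0, 36); (Posz 0, Posz 0, 37); (Posz 0, Posz 0, 38); (Posz 0, Posz 0, 39); (Posz 0, Posz 0, 40); (Posz 0, Posz 0, 41); (Posz 0, Posz 0, 42); (Posz 0, Posz 0, 43); (Posz 0, Posz 0, 44); (Posz 0, Posz 0, 45); (Posz 0, Posz 0, 46); (Posz 0, Posz 0, 47); (Posz 0, Posz 0, 48); (Posz 0, Posz 0, 49); (Posz 0, Posz 0, 50); (Posz 0, Posz 0, 51); (Posz 0, Posz 0, 90); (Posz 0, Posz 0, 91); (Posz 0, Posz 0, 92); (Posz 0, Posz 0, 93); (Posz 0, Posz 0, 94); (Posz 0, Posz 0, 95); (Posz 0, Posz 0, 60); (Posz 0, Posz 0, 61); (Posz 0, Posz 0, 62); (Posz 0, Posz 0, 63); (Posz 0, Posz 0, 64); (Posz 0, Posz 0, 65); (Posz 0, Posz 0, 66); (Posz 0, Posz 0, 67); (Posz 0, Posz 0, 68); (Posz 0, Posz 0, 69); (Posz 0, Posz 0, 70); (Posz 0, Posz 0, 71); (Posz 0, Posz 0, 72); (Posz 0, Posz 0, 73); (Posz 0, Posz 0, 74); (Posz 0, Posz 0, 75); (Posz 0, Posz 0, 76); (Posz 0, Posz 0, 77); (Posz 0, Posz 0, 78); (Posz 0, Posz 0, 79); (Posz 0, Posz 0, 80); (Posz 0, Posz 0, 81); (Posz 0, Posz 0, 82); (Posz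 0, Posz 0, 83); (Posz 0, Posz 0, 84); (Posz 0, Posz 0, 85); (Posz 0, Posz 0, 86); (Posz 0, Posz 0, 87); (Posz 0, Posz 0, 88); (Posz 0, Posz 0, 89); (Posz 1, Negz 0, 106); (Posz 1, Negz 0, 107); (Posz 1, Negz 0, 102); (Posz 1, Negz 0, 103); (Posz 1, Negz 0, 104); (Posz 1, Negz 0, 105); (Posz 0, Posz 0, 96); (Posz 0, Posz 0, 97); (Posz 0, Posz 0, 98); (Posz 0, Posz 0, 99); (Posz 0, Posz 0, 100); (Posz 0, Posz 0, 101)].
Definition partab : seq bool := [:: false; true; false; true; false; true; false; true; false; true; false; true; true; false; true; false; true; false; true; false; true; false; true; false; true; false; true; false; true; false; true; false; true; false; true; false; true; false; true; false; true; false; true; false; true; false; true; false; true; false; true; false; true; false; true; false; true; false; true; false; true; false; true; false; true; false; true; false; true; false; true; false; true; false; true; false; true; false; true; false; true; false; true; false; true; false; true; false; true; false; true; false; true; false; true; false; false; true; false; true; false; true; false; true; false; true; false; true].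
Definition wxp : seq nat := [:: 2; 1; 0; 1; 2; 1; 0; 2; 1; 0; 1; 2; 1; 0; 1; 0].
Definition wxm : seq nat := [:: 0; 1; 0; 1; 0; 2; 1; 0; 1; 2; 1; 2; 1; 0; 1; 2].
Definition wyp : seq nat := [:: 0; 2; 1; 0; 1; 2; 1; 0; 2; 1; 0; 1; 2; 1; 0; 1].
Definition wym : seq nat := [:: 1; 0; 1; 0; 2; 1; 0; 1; 2; 1; 0; 2; 1; 0; 1; 2].
Definition wjs : seq (seq nat) := [:: [:: ]; [:: 1]; [:: 0; 1]; [:: 0]; [:: 0; 1; 0; 1]; [:: 0; 1; 0]; [:: 0; 1; 0; 1; 0; 1]; [:: 0; 1; 0; 1; 0]; [:: 1; 0; 1; 0]; [:: 1; 0; 1; 0; 1]; [:: 1; 0]; [:: 1; 0; 1]; [:: 2]; [:: 2; 1]; [:: 0; 2; 1]; [:: 0; 2]; [:: 0; 2; 1; 0; 1]; [:: 0; 2; 1; 0]; [:: 2; 1; 0]; [:: 2; 1; 0; 1]; [:: 0; 1; 2]; [:: 0; 1; 2; 1]; [:: 0; 1; 0; 2; 1]; [:: 0; 1; 0; 2]; [:: 0; 1; 0; 2; 1; 0; 1]; [:: 0; 1; 0; 2; 1; 0]; [:: 0; 1; 2; 1; 0]; [:: 0; 1; 2; 1; 0; 1]; [:: 0; 1; 0; 1; 2]; [:: 0; 1; 0; 1; 2; 1]; [:: 0; 1; 0; 1; 0; 2; 1]; [:: 0; 1; 0; 1; 0; 2]; [:: 0; 1; 0; 1; 0; 2; 1;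 0; 1]; [:: 0; 1; 0; 1; 0; 2; 1; 0]; [:: 0; 1; 0; 1; 2; 1; 0]; [:: 0; 1; 0; 1; 2; 1; 0; 1]; [:: 0; 1; 0; 1; 0; 1; 2]; [:: 0; 1; 0; 1; 0; 1; 2; 1]; [:: 1; 0; 1; 0; 1; 2; 1]; [:: 1; 0; 1; 0; 1; 2]; [:: 1; 0; 1; 0; 1; 2; 1; 0; 1]; [:: 1; 0; 1; 0; 1; 2; 1; 0]; [:: 0; 1; 0; 1; 0; 1; 2; 1; 0]; [:: 0; 1; 0; 1; 0; 1; 2; 1; 0; 1]; [:: 1; 0; 1; 0; 2]; [:: 1; 0; 1; 0; 2; 1]; [:: 1; 0; 1; 2; 1]; [:: 1; 0; 1; 2]; [:: 1; 0; 1; 2; 1; 0; 1]; [:: 1; 0; 1; 2; 1; 0]; [:: 1; 0; 1; 0; 2; 1; 0]; [:: 1; 0; 1; 0; 2; 1; 0; 1]; [:: 1; 0; 2]; [:: 1; 0; 2; 1]; [:: 1; 2; 1]; [:: 1; 2]; [:: 1; 2; 1; 0; 1]; [:: 1; 2; 1; 0]; [:: 1; 0; 2; 1; 0]; [:: 1; 0; 2; 1; 0; 1]; [:: 2; 1; 2]; [:: 1; 2; 1; 2]; [:: 2; 1; 0; 2; 1]; [:: 2; 1; 0; 2]; [:: 1; 2; 1; 0; 2]; [:: 1; 2; 1; 0; 2; 1]; [:: 0; 1; 2; 1; 2]; [:: 0; 2; 1; 2]; [:: 0; 1; 2; 1; 0; 2; 1]; [:: 0; 1; 2; 1; 0; 2];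 [:: 0; 2; 1; 0; 2]; [:: 0; 2; 1; 0; 2; 1]; [:: 0; 1; 0; 1; 2; 1; 2]; [:: 0; 1; 0; 2; 1; 2]; [:: 0; 1; 0; 1; 2; 1; 0; 2; 1]; [:: 0; 1; 0; 1; 2; 1; 0; 2]; [:: 0; 1; 0; 2; 1; 0; 2]; [:: 0; 1; 0; 2; 1; 0; 2; 1]; [:: 0; 1; 0; 1; 0; 1; 2; 1; 2]; [:: 0; 1; 0; 1; 0; 2; 1; 2]; [:: 0; 1; 0; 1; 0; 1; 2; 1; 0; 2; 1]; [:: 0; 1; 0; 1; 0; 1; 2; 1; 0; 2]; [:: 0; 1; 0; 1; 0; 2; 1; 0; 2]; [:: 0; 1; 0; 1; 0; 2; 1; 0; 2; 1]; [:: 1; 0; 1; 0; 2; 1; 2]; [:: 1; 0; 1; 0; 1; 2; 1; 2]; [:: 1; 0; 1; 0; 2; 1; 0; 2; 1]; [:: 1; 0; 1; 0; 2; 1; 0; 2]; [:: 1; 0; 1; 0; 1; 2; 1; 0; 2]; [:: 1; 0; 1; 0; 1; 2; 1; 0; 2; 1]; [:: 1; 0; 2; 1; 2]; [:: 1; 0; 1; 2; 1; 2]; [:: 1; 0; 2; 1; 0; 2; 1]; [:: 1; 0; 2; 1; 0; 2]; [:: 1; 0; 1; 2; 1; 0; 2]; [:: 1; 0; 1; 2; 1; 0; 2; 1]; [:: 2; 1; 0; 1; 2; 1]; [:: 2; 1; 0; 1; 2]; [:: 0; 2; 1; 0; 1; 2; 1; 0]; [:: 2; 1; 0; 1; 2;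 1; 0]; [:: 0; 2; 1; 0; 1; 2]; [:: 0; 2; 1; 0; 1; 2; 1]; [:: 0; 1; 2; 1; 0; 1; 2; 1]; [:: 0; 1; 2; 1; 0; 1; 2]; [:: 0; 1; 0; 2; 1; 0; 1; 2; 1; 0]; [:: 0; 1; 2; 1; 0; 1; 2; 1; 0]; [:: 0; 1; 0; 2; 1; 0; 1; 2]; [:: 0; 1; 0; 2; 1; 0; 1; 2; 1]].
Definition vws : seq (seq nat) := [:: [:: ]; [:: 1]; [:: ]; [:: 1]; [:: ]; [:: 1]; [:: 3]; [:: 3; 1]; [:: 3]; [:: 3; 1]; [:: 3]; [:: 3; 1]; [:: 2]; [:: 1; 2]; [:: 1; 2; 1]; [:: 2; 1]; [:: ]; [:: 1]; [:: ]; [:: 1]; [:: 2]; [:: 1; 2]; [:: 1; 2; 1]; [:: 2; 1]; [:: ]; [:: 1]; [:: 3; 1; 2; 1; 2]; [:: 3; 2; 1; 2]; [:: 2]; [:: 1; 2]; [:: 3; 1; 2; 1]; [:: 3; 2; 1]; [:: 2; 1; 2; 1]; [:: 1; 2; 1; 2; 1]; [:: 3; 1; 2; 1; 2]; [:: 3; 2; 1; 2]; [:: 3; 2]; [:: 3; 1; 2]; [:: 3; 1; 2; 1]; [:: 3; 2; 1]; [:: 3]; [:: 3; 1]; [:: 3]; [:: 3; 1]; [:: 3; 2]; [:: 3; 1; 2]; [:: 3; 1; 2; 1]; [:: 3; 2; 1]; [:: 3]; [:: 3; 1]; [:: 1; 2; 1; 2]; [:: 2; 1; 2]; [:: 3;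 2]; [:: 3; 1; 2]; [:: 1; 2; 1]; [:: 2; 1]; [:: 3; 2; 1; 2; 1]; [:: 3; 1; 2; 1; 2; 1]; [:: 1; 2; 1; 2]; [:: 2; 1; 2]; [:: 2; 1; 2]; [:: 2; 1; 2; 1]; [:: 1; 2]; [:: 2]; [:: 3; 1; 2; 1; 2]; [:: 3; 2; 1; 2]; [:: 2; 1; 2]; [:: 2; 1; 2; 1]; [:: 3; 2; 1; 2; 1]; [:: 3; 1; 2; 1; 2; 1]; [:: 2; 1]; [:: 1; 2; 1]; [:: 2; 1; 2]; [:: 2; 1; 2; 1]; [:: 3; 2; 1; 2; 1]; [:: 3; 1; 2; 1; 2; 1]; [:: 2; 1]; [:: 1; 2; 1]; [:: 3; 2; 1; 2]; [:: 3; 2; 1; 2; 1]; [:: 3; 1; 2]; [:: 3; 2]; [:: 1; 2; 1; 2]; [:: 2; 1; 2]; [:: 3; 2; 1; 2]; [:: 3; 2; 1; 2; 1]; [:: 2; 1; 2; 1]; [:: 1; 2; 1; 2; 1]; [:: 3; 2; 1]; [:: 3; 1; 2; 1]; [:: 3; 2; 1; 2]; [:: 3; 2; 1; 2; 1]; [:: 2; 1; 2; 1]; [:: 1; 2; 1; 2; 1]; [:: 3; 2; 1]; [:: 3; 1; 2; 1]; [:: 1; 2; 1]; [:: 2; 1]; [:: 3; 2]; [:: 3; 1; 2]; [:: 2]; [:: 1; 2]; [:: 3; 2]; [:: 3; 1; 2]; [:: 3; 1; 2; 1]; [:: 3; 2; 1]; [:: 2]; [:: 1; 2]].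
Definition vreps : seq nat := [:: 0; 2; 4; 16; 18; 24].
Definition vcidx : seq nat := [:: 0; 0; 1; 1; 2; 2; 0; 0; 1; 1; 2; 2; 0; 0; 1; 1; 3; 3; 4; 4; 1; 1; 2; 2; 5; 5; 3; 3; 2; 2; 0; 0; 4; 4; 5; 5; 0; 0; 1; 1; 3; 3; 4; 4; 1; 1; 2; 2; 5; 5; 3; 3; 2; 2; 0; 0; 4; 4; 5; 5; 0; 0; 4; 4; 4; 4; 1; 1; 3; 3; 3; 3; 2; 2; 5; 5; 5; 5; 0; 0; 4; 4; 4; 4; 1; 1; 3; 3; 3; 3; 2; 2; 5; 5; 5; 5; 4; 4; 5; 5; 3; 3; 3; 3; 4; 4; 5; 5].
Local Open Scope ring_scope.

Definition ent (t : seq (nat * nat * nat)) (j : nat) := nth (1%N, 1%N, 0%N) t j.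

Lemma apply_tabE t (a b : int) (k : 'I_108) :
  apply_tab t (a, b, k) =
  (a + (ent t k).1.1%:Z - 1, b + (ent t k).1.2%:Z - 1, inord (ent t k).2).
Proof. by rewrite /apply_tab /ent; case: nth => [[x y] k']. Qed.

Definition tabi (i : nat) := if i == 0%N then r0tab else if i == 1%N then r1tab else r2tab.
Definition rK (i : nat) : flagK -> flagK := apply_tab (tabi i).
Arguments rK i f : simpl never.
Lemma rK0 : rK 0 = r0K. Proof. by []. Qed.
Lemma rK1 : rK 1 = r1K. Proof. by []. Qed.
Lemma rK2 : rK 2 = r2K. Proof. by []. Qed.

Fixpoint aw (w : seq nat) (f : flagK) : flagK :=
  if w is i :: w' then aw w' (rK i f) else f.

Definition tr (p q : int) (f : flagK) : flagK := (f.1.1 + p, f.1.2 + q, f.2).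

Arguments tr p q f : simpl never.
Lemma tr_tab t p q f : tr p q (apply_tab t f) = apply_tab t (tr p q f).
Proof.
case: f => [[a b] k].
rewrite apply_tabE (_ : tr p q (a, b, k) = (a + p, b + q, k)) // apply_tabE /tr /=.
by congr (_, _, _); lia.
Qed.

Lemma tr_rK i p q f : tr p q (rK i f) = rK i (tr p q f).
Proof. exact: tr_tab. Qed.

Lemma aw_tr w p q f : aw w (tr p q f) = tr p q (aw w f).
Proof. by elim: w f => [|i w IH] f //=; rewrite -tr_rK IH. Qed.

Lemma tr0 x y k : (x, y, k) = tr x y (0, 0, k).
Proof. by rewrite /tr /= !add0r. Qed.

Lemma trtr a b p q f : tr a b (tr p q f) = tr (p + a) (q + b) f.
Proof. by rewrite /tr /= !addrA. Qed.

Lemma int_ind2 (Q : int -> Prop) : Q 0 -> (forall z, Q z -> Q (z + 1)) ->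
  (forall z, Q z -> Q (z - 1)) -> forall z, Q z.
Proof.
move=> Q0 Hs Hp [] n; elim: n => [//|n IH].
- have -> : Posz n.+1 = Posz n + 1 by lia.
  by apply: Hs.
- have -> : Negz 0 = 0 - 1 by lia.
  by apply: Hp.
- have -> : Negz n.+1 = Negz n - 1 by lia.
  by apply: Hp.
Qed.

Lemma aw_P (P : flagK -> Prop) : (forall i f, P f -> P (rK i f)) ->
  forall w f, P f -> P (aw w f).
Proof. by move=> HP; elim=> [|i w IH] f Hf //=; apply: IH; apply: HP. Qed.

Lemma in108 (k : 'I_108) : (k : nat) \in iota 0 108.
Proof. by rewrite mem_iota /= ltn_ord. Qed.

Definition flagN := (int * int * nat)%type.
Definition pr (f : flagK) : flagN := (f.1.1, f.1.2, nat_of_ord f.2).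
Definition rN t (g : flagN) : flagN :=
  let e := ent t g.2 in (g.1.1 + e.1.1%:Z - 1, g.1.2 + e.1.2%:Z - 1, e.2).
Definition rKN (i : nat) := rN (tabi i).
Fixpoint awN (w : seq nat) (f : flagN) : flagN :=
  if w is i :: w' then awN w' (rKN i f) else f.

Lemma pr_inj : injective pr.
Proof.
by case=> [[a b] k] [[a' b'] k'] [-> -> /val_inj ->].
Qed.

Definition tab_ok t := all (fun j => (ent t j).2 < 108)%N (iota 0 108).
Lemma tabs_ok i : tab_ok (tabi i).
Proof. by rewrite /tabi; case: ifP => _; [|case: ifP => _]; vm_compute. Qed.

Lemma pr_rK i f : pr (rK i f) = rKN i (pr f).
Proof.
case: f => [[a b] k]; rewrite /rK apply_tabE /pr /rKN /rN /= inordK //.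
exact: (allP (tabs_ok i) k (in108 k)).
Qed.

Lemma pr_aw w f : pr (aw w f) = awN w (pr f).
Proof. by elim: w f => [|i w IH] f //=; rewrite IH pr_rK. Qed.

Lemma wj_ok : all (fun j => awN (nth [::] wjs j) (0, 0, 0%N) == (0, 0, j)) (iota 0 108).
Proof. by vm_compute. Qed.

Lemma mv_ok : [/\ aw wxp (0, 0, ord0) = (1, 0, ord0), aw wxm (0, 0, ord0) = (-1, 0, ord0),
   aw wyp (0, 0, ord0) = (0, 1, ord0) & aw wym (0, 0, ord0) = (0, -1, ord0)].
Proof.
have H : [&& awN wxp (0, 0, 0%N) == (1, 0, 0%N), awN wxm (0, 0, 0%N) == (-1, 0, 0%N),
   awN wyp (0, 0, 0%N) == (0, 1, 0%N) & awN wym (0, 0, 0%N) == (0, -1, 0%N)].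
  by vm_compute.
by case/and4P: H => /eqP H1 /eqP H2 /eqP H3 /eqP H4; split; apply: pr_inj;
  rewrite pr_aw.
Qed.

Lemma connK (P : flagK -> Prop) : P (0, 0, ord0) -> (forall i f, P f -> P (rK i f)) ->
  forall f, P f.
Proof.
move=> P0 HP.
have step : forall w x y d1 d2, aw w (0, 0, ord0) = (d1, d2, ord0) ->
    P (x, y, ord0) -> P (x + d1, y + d2, ord0).
  move=> w x y d1 d2 Hw Hxy; move: (aw_P HP w Hxy).
  by rewrite (tr0 x y ord0) aw_tr Hw /tr /= [d1 + _]addrC [d2 + _]addrC.
case: mv_ok => H1 H2 H3 H4.
have Hx : forall x, P (x, 0, ord0).
  apply: int_ind2 => // z Hz.
    by move: (step _ _ _ _ _ H1 Hz); rewrite addr0.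
  by move: (step _ _ _ _ _ H2 Hz); rewrite addr0.
have Hxy : forall x y, P (x, y, ord0).
  move=> x; apply: int_ind2 => // z Hz.
    by move: (step _ _ _ _ _ H3 Hz); rewrite addr0.
  by move: (step _ _ _ _ _ H4 Hz); rewrite addr0.
case=> [[x y] k].
have Ew : aw (nth [::] wjs k) (0, 0, ord0) = (0, 0, k).
  by apply: pr_inj; rewrite pr_aw (eqP (allP wj_ok k (in108 k))).
move: (aw_P HP (nth [::] wjs k) (Hxy x y)).
by rewrite (tr0 x y ord0) aw_tr Ew -tr0.
Qed.

Definition isaut (g : flagK -> flagK) := forall i f, g (rK i f) = rK i (g f).

Lemma aut_uniq g h : isaut g -> isaut h -> g (0, 0, ord0) = h (0, 0, ord0) ->
  forall f, g f = h f.
Proof. by move=> Hg Hh E; apply: connK => // i f Hf; rewrite Hg Hh Hf. Qed.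

Lemma isaut_tr p q : isaut (tr p q).
Proof. by move=> i f; rewrite tr_rK. Qed.

Lemma isaut_comp g h : isaut g -> isaut h -> isaut (g \o h).
Proof. by move=> Hg Hh i f /=; rewrite Hh Hg. Qed.

Definition rot (m : int * int * int * int) (t : seq (int * int * nat)) (f : flagK) : flagK :=
  let e := nth (0, 0, 0%N) t f.2 in
  (m.1.1.1 * f.1.1 + m.1.1.2 * f.1.2 + e.1.1, m.1.2 * f.1.1 + m.2 * f.1.2 + e.1.2, inord e.2).
Arguments rot m t f : simpl never.
Definition rotN (m : int * int * int * int) (t : seq (int * int * nat)) (f : flagN) : flagN :=
  let e := nth (0, 0, 0%N) t f.2 in
  (m.1.1.1 * f.1.1 + m.1.1.2 * f.1.2 + e.1.1, m.1.2 * f.1.1 + m.2 * f.1.2 + e.1.2, e.2).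
Definition rot_ok (t : seq (int * int * nat)) :=
  all (fun j => ((nth (0%R, 0%R, 0%N) t j).2 < 108)%N) (iota 0 108).

Lemma pr_rot m t f : rot_ok t -> pr (rot m t f) = rotN m t (pr f).
Proof.
move=> Ht; case: f => [[a b] k]; rewrite /rot /pr /rotN /= inordK //.
exact: (allP Ht k (in108 k)).
Qed.

Definition comm_chk m (t : seq (int * int * nat)) tab (j : nat) :=
  let d := ent tab j in let e := nth (0, 0, 0%N) t j in
  let e' := nth (0, 0, 0%N) t d.2 in let d' := ent tab e.2 in
  [&& e'.2 == d'.2,
      m.1.1.1 * (d.1.1%:Z - 1) + m.1.1.2 * (d.1.2%:Z - 1) + e'.1.1 == e.1.1 + d'.1.1%:Z - 1 &
      m.1.2 * (d.1.1%:Z - 1) + m.2 * (d.1.2%:Z - 1) + e'.1.2 == e.1.2 + d'.1.2%:Z - 1].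

Lemma lin_help (m1 m2 a b dx dy e' e d : int) :
  m1 * (dx - 1) + m2 * (dy - 1) + e' = e + d - 1 ->
  m1 * (a + dx - 1) + m2 * (b + dy - 1) + e' = m1 * a + m2 * b + e + d - 1.
Proof. by move=> H; nia. Qed.

Lemma lin_help2 (m1 m2 a b p q e : int) :
  m1 * (a + p) + m2 * (b + q) + e = m1 * a + m2 * b + e + (m1 * p + m2 * q).
Proof. by nia. Qed.

Lemma rot_aut m t : rot_ok t -> (forall i, all (comm_chk m t (tabi i)) (iota 0 108)) ->
  isaut (rot m t).
Proof.
move=> Ht Hc i f; apply: pr_inj; rewrite pr_rot // !pr_rK pr_rot //.
case: f => [[a b] k]; rewrite /pr /rotN /rKN /rN /=.
move: (allP (Hc i) k (in108 k)); rewrite /comm_chk.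
case/and3P => /eqP E1 /eqP E2 /eqP E3.
by congr (_, _, _); [apply: lin_help E2 | apply: lin_help E3 | done].
Qed.

Lemma rot_tr m t p q f :
  rot m t (tr p q f) = tr (m.1.1.1 * p + m.1.1.2 * q) (m.1.2 * p + m.2 * q) (rot m t f).
Proof. by case: f => [[a b] k]; rewrite /rot /tr /=; congr (_, _, _); apply: lin_help2. Qed.

Definition trN (p q : int) (f : flagN) : flagN := (f.1.1 + p, f.1.2 + q, f.2).
Lemma pr_tr p q f : pr (tr p q f) = trN p q (pr f).
Proof. by []. Qed.

Definition oj (j : nat) : 'I_108 := inord j.
Lemma pr_oj x y j : (j < 108)%N -> pr (x, y, oj j) = (x, y, j).
Proof. by move=> Hj; rewrite /pr /oj /= inordK. Qed.

(* hexagon invariant *)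
Definition sK f := rK 0 (rK 1 f).
Definition hexb f := [&& iter 6 sK f == f, iter 2 sK f != f & iter 3 sK f != f].
Definition sN g := rKN 0 (rKN 1 g).
Definition hexbN g := [&& iter 6 sN g == g, iter 2 sN g != g & iter 3 sN g != g].

Lemma iter_aut g n f : isaut g -> g (iter n sK f) = iter n sK (g f).
Proof. by move=> Hg; elim: n => [|n IH] //=; rewrite /sK !Hg IH. Qed.

Lemma hexb_aut g f : isaut g -> injective g -> hexb (g f) = hexb f.
Proof. by move=> Hg Hi; rewrite /hexb -!(iter_aut _ _ Hg) !(inj_eq Hi). Qed.

Lemma pr_iter n f : pr (iter n sK f) = iter n sN (pr f).
Proof. by elim: n => [|n IH] //=; rewrite /sK !pr_rK IH. Qed.

Lemma hexbE f : hexb f = hexbN (pr f).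
Proof. by rewrite /hexb /hexbN -!pr_iter !(inj_eq pr_inj). Qed.

Lemma hex_chk : all (fun k => (hexbN (0, 0, k) && ~~ nth false partab k) ==>
   (k \in [:: 0; 2; 4; 6; 8; 10]%N)) (iota 0 108).
Proof. by vm_compute. Qed.

Definition par_chk (t : seq (nat * nat * nat)) := all (fun j => nth false partab (ent t j).2 != nth false partab j) (iota 0 108).
Lemma par_ok i : par_chk (tabi i).
Proof. by rewrite /tabi; case: ifP => _; [|case: ifP => _]; vm_compute. Qed.

Lemma col_K (c : flagK -> bool) : (forall i f, c (rK i f) = ~~ c f) ->
  forall f, c f = c (0, 0, ord0) (+) nth false partab f.2.
Proof.
move=> Hc; apply: connK; first by rewrite addbF.
move=> i f Hf.
have E : nat_of_ord (rK i f).2 = (ent (tabi i) f.2).2.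
  by move: (pr_rK i f); rewrite /pr /rKN /rN /= => [[_ _ ->]].
have := allP (par_ok i) f.2 (in108 _); rewrite E Hc Hf.
by case: (nth false partab _); case: (nth false partab _); case: (c _).
Qed.

Lemma sameF_aw w x : all (fun i => i < 2)%N w -> sameF_K x (aw w x).
Proof.
elim: w x => [|i w IH] x /=; first by move=> _; apply: rt_refl.
case/andP=> Hi Hw; apply: rt_trans (IH _ Hw); apply: rt_step.
by case: i Hi => [|[|]] //= _; [left | right].
Qed.

Lemma sameE_aw w x : all (fun i => (i == 0) || (i == 2))%N w -> sameE_K x (aw w x).
Proof.
elim: w x => [|i w IH] x /=; first by move=> _; apply: rt_refl.
case/andP=> Hi Hw; apply: rt_trans (IH _ Hw); apply: rt_step.
by case: i Hi => [|[|[|]]] //= _; [left | right].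
Qed.

Lemma fix_wit (R : relation flagK) m t a b c1 c2 d1 d2 f0 w :
  (forall x, R x (aw w x)) ->
  m.1.1.1 * c1 + m.1.1.2 * c2 + a = d1 + c1 ->
  m.1.2 * c1 + m.2 * c2 + b = d2 + c2 ->
  aw w f0 = tr d1 d2 (rot m t f0) ->
  exists f, R f (tr a b (rot m t f)).
Proof.
move=> HR E1 E2 Ew; exists (tr c1 c2 f0).
by rewrite rot_tr trtr E1 E2 -trtr -Ew -aw_tr.
Qed.

Lemma ex_fixF m t a b c1 c2 d1 d2 f0 w : all (fun i => i < 2)%N w ->
  m.1.1.1 * c1 + m.1.1.2 * c2 + a = d1 + c1 -> m.1.2 * c1 + m.2 * c2 + b = d2 + c2 ->
  aw w f0 = tr d1 d2 (rot m t f0) ->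
  exists f, sameF_K f (tr a b (rot m t f)) \/ sameE_K f (tr a b (rot m t f)).
Proof.
move=> Hw E1 E2 Ew; have [f Hf] := fix_wit (fun x => sameF_aw x Hw) E1 E2 Ew.
by exists f; left.
Qed.

Lemma ex_fixE m t a b c1 c2 d1 d2 f0 w : all (fun i => (i == 0) || (i == 2))%N w ->
  m.1.1.1 * c1 + m.1.1.2 * c2 + a = d1 + c1 -> m.1.2 * c1 + m.2 * c2 + b = d2 + c2 ->
  aw w f0 = tr d1 d2 (rot m t f0) ->
  exists f, sameF_K f (tr a b (rot m t f)) \/ sameE_K f (tr a b (rot m t f)).
Proof.
move=> Hw E1 E2 Ew; have [f Hf] := fix_wit (fun x => sameE_aw x Hw) E1 E2 Ew.
by exists f; right.
Qed.

Lemma mod2 (a : int) : exists c d, a = c * 2 + d /\ (d = 0 \/ d = 1).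
Proof.
exists (a %/ 2)%Z, (a %% 2)%Z; split; first exact: divz_eq.
have := @modz_ge0 a 2 isT; have := @ltz_pmod a 2 isT; lia.
Qed.

Lemma mod3 (a : int) : exists c d, a = c * 3 + d /\ [\/ d = 0, d = 1 | d = 2].
Proof.
exists (a %/ 3)%Z, (a %% 3)%Z; split; first exact: divz_eq.
have := @modz_ge0 a 3 isT; have := @ltz_pmod a 3 isT.
have [] : (a %% 3)%Z = 0 \/ (a %% 3)%Z = 1 \/ (a %% 3)%Z = 2 by lia.
  by move=> ->; constructor 1.
by case=> ->; [constructor 2 | constructor 3].
Qed.

Definition RM1 : int * int * int * int := (0, -1, 1, 1).
Lemma rot1_ok : rot_ok RT1. Proof. by vm_compute. Qed.
Lemma rot1_aut : isaut (rot RM1 RT1).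
Proof.
apply: rot_aut; first exact: rot1_ok.
by move=> i; rewrite /tabi; case: ifP => _; [|case: ifP => _]; vm_compute.
Qed.
Lemma rot1_0 : rot RM1 RT1 (0, 0, ord0) = (0, 0, oj 2).
Proof. by apply: pr_inj; rewrite pr_rot ?rot1_ok // pr_oj //; vm_compute. Qed.
Lemma W1_00 : aw [:: 0; 1]%N (Posz 0, Posz 0, oj 0) = tr 0 0 (rot RM1 RT1 (Posz 0, Posz 0, oj 0)).
Proof. by apply: pr_inj; rewrite pr_aw pr_tr pr_rot ?rot1_ok // pr_oj //; vm_compute. Qed.
Definition RM2 : int * int * int * int := (-1, -1, 1, 0).
Lemma rot2_ok : rot_ok RT2. Proof. by vm_compute. Qed.
Lemma rot2_aut : isaut (rot RM2 RT2).
Proof.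
apply: rot_aut; first exact: rot2_ok.
by move=> i; rewrite /tabi; case: ifP => _; [|case: ifP => _]; vm_compute.
Qed.
Lemma rot2_0 : rot RM2 RT2 (0, 0, ord0) = (0, 0, oj 4).
Proof. by apply: pr_inj; rewrite pr_rot ?rot2_ok // pr_oj //; vm_compute. Qed.
Lemma W2_00 : aw [:: 0; 1; 0; 1]%N (Posz 0, Posz 0, oj 0) = tr 0 0 (rot RM2 RT2 (Posz 0, Posz 0, oj 0)).
Proof. by apply: pr_inj; rewrite pr_aw pr_tr pr_rot ?rot2_ok // pr_oj //; vm_compute. Qed.
Lemma W2_10 : aw [:: 0; 1]%N (Posz 0, Posz 0, oj 96) = tr 1 0 (rot RM2 RT2 (Posz 0, Posz 0, oj 96)).
Proof. by apply: pr_inj; rewrite pr_aw pr_tr pr_rot ?rot2_ok // pr_oj //; vm_compute. Qed.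
Lemma W2_20 : aw [:: 0; 1]%N (Posz 1, Posz 0, oj 102) = tr 2 0 (rot RM2 RT2 (Posz 1, Posz 0, oj 102)).
Proof. by apply: pr_inj; rewrite pr_aw pr_tr pr_rot ?rot2_ok // pr_oj //; vm_compute. Qed.
Definition RM3 : int * int * int * int := (-1, 0, 0, -1).
Lemma rot3_ok : rot_ok RT3. Proof. by vm_compute. Qed.
Lemma rot3_aut : isaut (rot RM3 RT3).
Proof.
apply: rot_aut; first exact: rot3_ok.
by move=> i; rewrite /tabi; case: ifP => _; [|case: ifP => _]; vm_compute.
Qed.
Lemma rot3_0 : rot RM3 RT3 (0, 0, ord0) = (0, 0, oj 6).
Proof. by apply: pr_inj; rewrite pr_rot ?rot3_ok // pr_oj //; vm_compute. Qed.
Lemma W3_00 : aw [:: 0; 1; 0; 1; 0; 1]%N (Posz 0, Posz 0, oj 0) = tr 0 0 (rot RM3 RT3 (Posz 0, Posz 0, oj 0)).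
Proof. by apply: pr_inj; rewrite pr_aw pr_tr pr_rot ?rot3_ok // pr_oj //; vm_compute. Qed.
Lemma W3_10 : aw [:: 0; 2]%N (Posz 0, Posz 0, oj 62) = tr 1 0 (rot RM3 RT3 (Posz 0, Posz 0, oj 62)).
Proof. by apply: pr_inj; rewrite pr_aw pr_tr pr_rot ?rot3_ok // pr_oj //; vm_compute. Qed.
Lemma W3_01 : aw [:: 0; 2]%N (Posz 0, Posz 0, oj 68) = tr 0 1 (rot RM3 RT3 (Posz 0, Posz 0, oj 68)).
Proof. by apply: pr_inj; rewrite pr_aw pr_tr pr_rot ?rot3_ok // pr_oj //; vm_compute. Qed.
Lemma W3_11 : aw [:: 0; 2]%N (Posz 0, Posz 1, oj 92) = tr 1 1 (rot RM3 RT3 (Posz 0, Posz 1, oj 92)).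
Proof. by apply: pr_inj; rewrite pr_aw pr_tr pr_rot ?rot3_ok // pr_oj //; vm_compute. Qed.
Definition RM4 : int * int * int * int := (0, 1, -1, -1).
Lemma rot4_ok : rot_ok RT4. Proof. by vm_compute. Qed.
Lemma rot4_aut : isaut (rot RM4 RT4).
Proof.
apply: rot_aut; first exact: rot4_ok.
by move=> i; rewrite /tabi; case: ifP => _; [|case: ifP => _]; vm_compute.
Qed.
Lemma rot4_0 : rot RM4 RT4 (0, 0, ord0) = (0, 0, oj 8).
Proof. by apply: pr_inj; rewrite pr_rot ?rot4_ok // pr_oj //; vm_compute. Qed.
Lemma W4_00 : aw [:: 1; 0; 1; 0]%N (Posz 0, Posz 0, oj 0) = tr 0 0 (rot RM4 RT4 (Posz 0, Posz 0, oj 0)).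
Proof. by apply: pr_inj; rewrite pr_aw pr_tr pr_rot ?rot4_ok // pr_oj //; vm_compute. Qed.
Lemma W4_10 : aw [:: 1; 0]%N (Posz 1, Negz 0, oj 102) = tr 1 0 (rot RM4 RT4 (Posz 1, Negz 0, oj 102)).
Proof. by apply: pr_inj; rewrite pr_aw pr_tr pr_rot ?rot4_ok // pr_oj //; vm_compute. Qed.
Lemma W4_20 : aw [:: 1; 0]%N (Posz 1, Negz 0, oj 96) = tr 2 0 (rot RM4 RT4 (Posz 1, Negz 0, oj 96)).
Proof. by apply: pr_inj; rewrite pr_aw pr_tr pr_rot ?rot4_ok // pr_oj //; vm_compute. Qed.
Definition RM5 : int * int * int * int := (1, 1, -1, 0).
Lemma rot5_ok : rot_ok RT5. Proof. by vm_compute. Qed.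
Lemma rot5_aut : isaut (rot RM5 RT5).
Proof.
apply: rot_aut; first exact: rot5_ok.
by move=> i; rewrite /tabi; case: ifP => _; [|case: ifP => _]; vm_compute.
Qed.
Lemma rot5_0 : rot RM5 RT5 (0, 0, ord0) = (0, 0, oj 10).
Proof. by apply: pr_inj; rewrite pr_rot ?rot5_ok // pr_oj //; vm_compute. Qed.
Lemma W5_00 : aw [:: 1; 0]%N (Posz 0, Posz 0, oj 0) = tr 0 0 (rot RM5 RT5 (Posz 0, Posz 0, oj 0)).
Proof. by apply: pr_inj; rewrite pr_aw pr_tr pr_rot ?rot5_ok // pr_oj //; vm_compute. Qed.
Lemma fix1 a b : exists f, sameF_K f (tr a b (rot RM1 RT1 f)) \/ sameE_K f (tr a b (rot RM1 RT1 f)).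
Proof. apply: (ex_fixF (c1 := -b) (c2 := a + b) _ _ _ W1_00) => //; rewrite /RM1 /=; lia. Qed.
Lemma fix5 a b : exists f, sameF_K f (tr a b (rot RM5 RT5 f)) \/ sameE_K f (tr a b (rot RM5 RT5 f)).
Proof. apply: (ex_fixF (c1 := a + b) (c2 := - a) _ _ _ W5_00) => //; rewrite /RM5 /=; lia. Qed.
Lemma fix3 a b : exists f, sameF_K f (tr a b (rot RM3 RT3 f)) \/ sameE_K f (tr a b (rot RM3 RT3 f)).
Proof.
have [c1 [d1 [Ea [] ?]]] := mod2 a; have [c2 [d2 [Eb [] ?]]] := mod2 b; subst.
- apply: (ex_fixF (c1 := c1) (c2 := c2) _ _ _ W3_00) => //; rewrite /RM3 /=; lia.
- apply: (ex_fixE (c1 := c1) (c2 := c2) _ _ _ W3_01) => //; rewrite /RM3 /=; lia.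
- apply: (ex_fixE (c1 := c1) (c2 := c2) _ _ _ W3_10) => //; rewrite /RM3 /=; lia.
- apply: (ex_fixE (c1 := c1) (c2 := c2) _ _ _ W3_11) => //; rewrite /RM3 /=; lia.
Qed.
Lemma fix2 a b : exists f, sameF_K f (tr a b (rot RM2 RT2 f)) \/ sameE_K f (tr a b (rot RM2 RT2 f)).
Proof.
have [q [d [Eq [] ?]]] := mod3 (a - b); subst.
- apply: (ex_fixF (c1 := q) (c2 := q + b) _ _ _ W2_00) => //; rewrite /RM2 /=; lia.
- apply: (ex_fixF (c1 := q) (c2 := q + b) _ _ _ W2_10) => //; rewrite /RM2 /=; lia.
- apply: (ex_fixF (c1 := q) (c2 := q + b) _ _ _ W2_20) => //; rewrite /RM2 /=; lia.
Qed.
Lemma fix4 a b : exists f, sameF_K f (tr a b (rot RM4 RT4 f)) \/ sameE_K f (tr a b (rot RM4 RT4 f)).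
Proof.
have [q [d [Eq [] ?]]] := mod3 (a - b); subst.
- apply: (ex_fixF (c1 := b + 2 * q) (c2 := - q) _ _ _ W4_00) => //; rewrite /RM4 /=; lia.
- apply: (ex_fixF (c1 := b + 2 * q) (c2 := - q) _ _ _ W4_10) => //; rewrite /RM4 /=; lia.
- apply: (ex_fixF (c1 := b + 2 * q) (c2 := - q) _ _ _ W4_20) => //; rewrite /RM4 /=; lia.
Qed.

Lemma rK_cases i : rK i = r0K \/ rK i = r1K \/ rK i = r2K.
Proof.
rewrite /rK /tabi; case: ifP => _; first by left.
by case: ifP => _; [right; left | right; right].
Qed.

Lemma autK_isaut g : is_autK g -> isaut g.
Proof. by case=> _ [H0 [H1 H2]] i f; case: (rK_cases i) => [->|[->|->]]. Qed.

Lemma trK p q f : tr (- p) (- q) (tr p q f) = f.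
Proof. by case: f => [[x y] k]; rewrite /tr /= !addrK. Qed.

Lemma tr_inj p q : injective (tr p q).
Proof. exact: can_inj (trK p q). Qed.

Lemma rot_excl Gam m t (k0 : nat) g a b k :
  acts_freely_on sameE_K Gam -> acts_freely_on sameF_K Gam -> Gam g -> isaut g ->
  isaut (rot m t) -> rot m t (0, 0, ord0) = (0, 0, oj k0) -> (0 < k0 < 108)%N ->
  (forall a b, exists f, sameF_K f (tr a b (rot m t f)) \/ sameE_K f (tr a b (rot m t f))) ->
  g (0, 0, ord0) = (a, b, k) -> nat_of_ord k = k0 -> False.
Proof.
move=> HE HF Hg Ag Ar R0 Hk0 Hfix E Ek.
have Eg : forall f, g f = (tr a b \o rot m t) f.
  apply: (aut_uniq Ag (isaut_comp (@isaut_tr a b) Ar)).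
  rewrite E /= R0 /tr /= !add0r; congr (_, _, _); apply: val_inj => /=.
  by rewrite /oj inordK ?Ek //; case/andP: Hk0.
have [f Hf] := Hfix a b.
have Hid : forall h, g h = h.
  case: Hf => Hf; [apply: (HF g Hg) | apply: (HE g Hg)]; exists f; by rewrite Eg.
move: (Hid (0, 0, ord0)); rewrite E => [[_ _ Hk]].
by move: Ek Hk0; rewrite Hk /= => <-.
Qed.

Lemma gam_tr Gam X eta :
  subgroup_AutK Gam -> acts_freely_on sameE_K Gam -> acts_freely_on sameF_K Gam ->
  is_quotient_of_K Gam X eta -> orientable X ->
  forall g, Gam g -> exists a b, forall f, g f = tr a b f.
Proof.
move=> [Haut _] HE HF [_ [Q0 [Q1 [Q2 Qeq]]]] [col Hcol] g Hg.
have Ag := autK_isaut (Haut g Hg).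
have Ig : injective g by case: (Haut g Hg) => /bij_inj.
case E: (g (0, 0, ord0)) => [[a b] k].
have Hh0 : hexb (0, 0, ord0) by rewrite hexbE; vm_compute.
have Hh : hexbN (0, 0, nat_of_ord k).
  move: Hh0; rewrite -(hexb_aut _ Ag Ig) E (tr0 a b k).
  by rewrite (hexb_aut _ (@isaut_tr a b) (@tr_inj a b)) hexbE.
pose c := fun f => col (eta f).
have Hc : forall i f, c (rK i f) = ~~ c f.
  move=> i f; rewrite /c; case: (Hcol (eta f)) => H0 H1 H2.
  case: (rK_cases i) => [->|[->|->]].
  - by rewrite Q0; move: H0; case: (col _); case: (col _).
  - by rewrite Q1; move: H1; case: (col _); case: (col _).
  - by rewrite Q2; move: H2; case: (col _); case: (col _).
have Cg : c (g (0, 0, ord0)) = c (0, 0, ord0).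
  by rewrite /c (proj2 (Qeq (0, 0, ord0) (g (0, 0, ord0)))) //; exists g.
have Hp : nth false partab k = false.
  move: Cg; rewrite E (col_K Hc (a, b, k)) /=.
  by case: (c _); case: (nth _ _ _).
have := allP hex_chk k (in108 k); rewrite Hh Hp /= !inE.
case/orP=> [/eqP Hk|]; last case/orP=> [/eqP Hk|]; last case/orP=> [/eqP Hk|];
  last case/orP=> [/eqP Hk|]; last case/orP=> [/eqP Hk|/eqP Hk].
- exists a, b; apply: (aut_uniq Ag (@isaut_tr a b)).
  rewrite E /tr /= !add0r; congr (_, _, _); exact: val_inj.
- by case: (rot_excl HE HF Hg Ag rot1_aut rot1_0 isT fix1 E Hk).
- by case: (rot_excl HE HF Hg Ag rot2_aut rot2_0 isT fix2 E Hk).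
- by case: (rot_excl HE HF Hg Ag rot3_aut rot3_0 isT fix3 E Hk).
- by case: (rot_excl HE HF Hg Ag rot4_aut rot4_0 isT fix4 E Hk).
- by case: (rot_excl HE HF Hg Ag rot5_aut rot5_0 isT fix5 E Hk).
Qed.

Lemma lift_aut Gam (X : fmap) eta (A B : flagK -> flagK) :
  is_quotient_of_K Gam X eta -> isaut A -> (forall f, B (A f) = f) ->
  (forall h, Gam h -> exists h', Gam h' /\ forall f, A (h f) = h' (A f)) ->
  (forall h, Gam h -> exists h', Gam h' /\ forall f, B (h f) = h' (B f)) ->
  exists p : {perm fl X}, p \in AutX X /\ forall f, p (eta f) = eta (A f).
Proof.
move=> [Hs [Q0 [Q1 [Q2 Qeq]]]] AA BA NA NB.
pose sec y := proj1_sig (constructive_indefinite_description _ (Hs y)).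
have Hsec y : eta (sec y) = y := proj2_sig (constructive_indefinite_description _ (Hs y)).
have liftE : forall C, (forall h, Gam h -> exists h', Gam h' /\ forall f, C (h f) = h' (C f)) ->
   forall f, eta (C (sec (eta f))) = eta (C f).
  move=> C NC f; have [h [Hh Ehf]] := proj1 (Qeq _ _) (Hsec (eta f)).
  have [h' [Hh' Eh']] := NC h Hh.
  apply/(proj2 (Qeq _ _)); exists h'; split => //; by rewrite -Eh' Ehf.
pose fA y := eta (A (sec y)); pose fB y := eta (B (sec y)).
have fAE f : fA (eta f) = eta (A f) := liftE A NA f.
have fBE f : fB (eta f) = eta (B f) := liftE B NB f.
have fK : cancel fA fB by move=> y; rewrite -(Hsec y) fAE fBE BA.
exists (perm (can_inj fK)); split; last by move=> f; rewrite permE fAE.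
rewrite inE; apply/forallP => y; rewrite !permE.
have [f <-] := Hs y.
rewrite -Q0 -Q1 -Q2 !fAE -rK0 -rK1 -rK2 !AA rK0 rK1 rK2 Q0 Q1 Q2.
by rewrite !eqxx.
Qed.

Lemma connect_map (T : finType) (e : rel T) (h : T -> T) :
  (forall u v, e u v -> e (h u) (h v)) -> forall x y, connect e x y -> connect e (h x) (h y).
Proof.
move=> He x y /connectP [pth Hp ->]; elim: pth x Hp => [|u pth IH] x /=.
  by rewrite connect0.
case/andP=> Hxu Hp; exact: connect_trans (connect1 (He _ _ Hxu)) (IH _ Hp).
Qed.

Lemma autX_P (X : fmap) (p : {perm fl X}) : p \in AutX X ->
  forall x, [/\ p (s0 x) = s0 (p x), p (s1 x) = s1 (p x) & p (s2 x) = s2 (p x)].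
Proof. by rewrite inE => /forallP H x; case/and3P: (H x) => /eqP ? /eqP ? /eqP ?. Qed.

Lemma autX_mul (X : fmap) (p q : {perm fl X}) : p \in AutX X -> q \in AutX X -> (p * q)%g \in AutX X.
Proof.
move=> Hp Hq; rewrite inE; apply/forallP => x; rewrite !permM.
case: (autX_P Hp x) => -> -> ->; case: (autX_P Hq (p x)) => -> -> ->.
by rewrite !eqxx.
Qed.

Lemma autX_inv (X : fmap) (p : {perm fl X}) : p \in AutX X -> (p^-1)%g \in AutX X.
Proof.
move=> Hp; rewrite inE; apply/forallP => x.
case: (autX_P Hp ((p^-1)%g x)); rewrite permKV => H0 H1 H2.
by apply/and3P; split; apply/eqP; apply: (@perm_inj _ p); rewrite permKV.
Qed.

Lemma vimg (X : fmap) (p : {perm fl X}) x : p \in AutX X ->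
  [set p z | z in vertex_of x] = vertex_of (p x).
Proof.
move=> Hp.
have Hv : forall (q : {perm fl X}), q \in AutX X -> forall u v, @vrel X u v -> @vrel X (q u) (q v).
  move=> q Hq u v; rewrite /vrel; case: (autX_P Hq u) => _ <- <-.
  by rewrite !(inj_eq perm_inj).
apply/setP => z; rewrite inE; apply/imsetP/idP.
  case=> z'; rewrite inE => Hz' ->; exact: connect_map (Hv _ Hp) _ _ Hz'.
move=> Hz; exists ((p^-1)%g z); last by rewrite permKV.
rewrite inE; have := connect_map (Hv _ (autX_inv Hp)) Hz.
by rewrite permK.
Qed.

Lemma vorbit_perm (X : fmap) (p : {perm fl X}) x : p \in AutX X ->
  vorbit (vertex_of (p x)) = vorbit (vertex_of x).
Proof.
move=> Hp; apply/setP => W; apply/imsetP/imsetP => [[q Hq ->]|[q Hq ->]].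
  exists (p * q)%g; first exact: autX_mul.
  by rewrite (vimg _ Hq) (vimg _ (autX_mul Hp Hq)) permM.
have Hi := autX_mul (autX_inv Hp) Hq.
exists (p^-1 * q)%g => //.
by rewrite (vimg _ Hq) (vimg _ Hi) permM permK.
Qed.

Lemma vertex_s (X : fmap) (x y : fl X) : (y = s1 x \/ y = s2 x) ->
  (forall z : fl X, s1 (s1 z) = z) -> (forall z : fl X, s2 (s2 z) = z) -> vertex_of y = vertex_of x.
Proof.
move=> H H1 H2.
have Hxy : connect (@vrel X) x y.
  by apply: connect1; rewrite /vrel; case: H => ->; rewrite eqxx ?orbT.
have Hyx : connect (@vrel X) y x.
  by apply: connect1; rewrite /vrel; case: H => ->; rewrite ?H1 ?H2 eqxx ?orbT.
apply/setP => z; rewrite !inE; apply/idP/idP => Hz.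
  exact: connect_trans Hxy Hz.
exact: connect_trans Hyx Hz.
Qed.

Definition inv_chk (t : seq (nat * nat * nat)) (j : nat) :=
  let d := ent t j in let d' := ent t d.2 in
  [&& d'.2 == j, (d.1.1 + d'.1.1 == 2)%N & (d.1.2 + d'.1.2 == 2)%N].
Lemma inv_ok i : all (inv_chk (tabi i)) (iota 0 108).
Proof. by rewrite /tabi; case: ifP => _; [|case: ifP => _]; vm_compute. Qed.

Lemma rK_inv i f : rK i (rK i f) = f.
Proof.
apply: pr_inj; rewrite !pr_rK.
case: f => [[x y] k]; rewrite /pr /rKN /rN /=.
case/and3P: (allP (inv_ok i) k (in108 k)) => /eqP -> /eqP E1 /eqP E2.
by congr (_, _, _); lia.
Qed.

Definition rho := rot RM3 RT3.
Lemma rho_inv f : rho (rho f) = f.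
Proof.
have Hid : isaut id by [].
apply: (aut_uniq (isaut_comp rot3_aut rot3_aut) Hid) => /=.
by apply: pr_inj; rewrite /rho !pr_rot ?rot3_ok //; vm_compute.
Qed.

Definition mvK (c : nat) (f : flagK) := if c == 3%N then rho f else rK c f.
Fixpoint aw3 (w : seq nat) (f : flagK) : flagK :=
  if w is c :: w' then aw3 w' (mvK c f) else f.
Definition mvN (c : nat) (g : flagN) := if c == 3%N then rotN RM3 RT3 g else rKN c g.
Fixpoint awN3 (w : seq nat) (g : flagN) : flagN :=
  if w is c :: w' then awN3 w' (mvN c g) else g.
Lemma pr_aw3 w f : pr (aw3 w f) = awN3 w (pr f).
Proof.
elim: w f => [|c w IH] f //=; rewrite IH /mvK /mvN.
by case: ifP => _; rewrite ?pr_rot ?rot3_ok ?pr_rK.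
Qed.

Definition vchk (j : nat) :=
  let w := nth [::] vws j in
  [&& (awN3 w (0, 0, j)).2 == nth 0%N vreps (nth 0%N vcidx j), (nth 0%N vcidx j < 6)%N,
      (nth 0%N vreps (nth 0%N vcidx j) < 108)%N &
      all (fun c => (c == 1) || (c == 2) || (c == 3))%N w].
Lemma vchk_ok : all vchk (iota 0 108).
Proof. by vm_compute. Qed.

Theorem theorem1 (Gam : (flagK -> flagK) -> Prop) (X : fmap)
    (eta : flagK -> fl X) :
  subgroup_AutK Gam ->
  acts_freely_on sameV_K Gam ->
  acts_freely_on sameE_K Gam ->
  acts_freely_on sameF_K Gam ->
  is_quotient_of_K Gam X eta ->
  on_torus X ->
  polyhedral X ->
  (n_vertex_orbits X <= 6)%N.
Proof.
move=> HG HV HE HF HQ [_ [Hor _]] _.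
have Gtr := gam_tr HG HE HF HQ Hor.
have HQ' := HQ; case: HQ' => Hs [Q0 [Q1 [Q2 Qeq]]].
case: HG => _ [_ [_ Hinv]].
have Ntr : forall p q h, Gam h -> exists h', Gam h' /\ forall f, tr p q (h f) = h' (tr p q f).
  move=> p q h Hh; exists h; split => // f; have [a [b Eh]] := Gtr h Hh.
  by rewrite !Eh !trtr (addrC a) (addrC b).
have Nrho : forall h, Gam h -> exists h', Gam h' /\ forall f, rho (h f) = h' (rho f).
  move=> h Hh; have [h2 [Hh2 [K1 K2]]] := Hinv h Hh.
  have [a [b Eh]] := Gtr h Hh; have [a2 [b2 Eh2]] := Gtr h2 Hh2.
  exists h2; split => // f.
  have := K1 (0, 0, ord0); rewrite Eh Eh2 /tr /=; case=> Ha Hb.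
  rewrite Eh Eh2 /rho rot_tr; congr (tr _ _ _); rewrite /RM3 /=; lia.
have trP : forall p q, exists P : {perm fl X}, P \in AutX X /\ forall f, P (eta f) = eta (tr p q f).
  move=> p q; apply: (lift_aut HQ (@isaut_tr p q) (fun f => @trK p q f) (Ntr p q) (Ntr (-p) (-q))).
have rhoP : exists P : {perm fl X}, P \in AutX X /\ forall f, P (eta f) = eta (rho f).
  exact: (lift_aut HQ rot3_aut (fun f => @rho_inv f) Nrho Nrho).
have S1 : forall z : fl X, s1 (s1 z) = z.
  by move=> z; have [f <-] := Hs z; rewrite -!Q1 -rK1 rK_inv.
have S2 : forall z : fl X, s2 (s2 z) = z.
  by move=> z; have [f <-] := Hs z; rewrite -!Q2 -rK2 rK_inv.
pose cls f := vorbit (vertex_of (eta f)).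
have C1 : forall f, cls (rK 1 f) = cls f.
  move=> f; rewrite /cls rK1 Q1.
  by rewrite (@vertex_s X (eta f) (s1 (eta f)) (or_introl erefl) S1 S2).
have C2 : forall f, cls (rK 2 f) = cls f.
  move=> f; rewrite /cls rK2 Q2.
  by rewrite (@vertex_s X (eta f) (s2 (eta f)) (or_intror erefl) S1 S2).
have Ctr : forall p q f, cls (tr p q f) = cls f.
  by move=> p q f; have [P [HP EP]] := trP p q; rewrite /cls -EP vorbit_perm.
have Crho : forall f, cls (rho f) = cls f.
  by move=> f; have [P [HP EP]] := rhoP; rewrite /cls -EP vorbit_perm.
have Caw : forall w f, all (fun c => (c == 1) || (c == 2) || (c == 3))%N w ->
    cls (aw3 w f) = cls f.
  elim=> [|c w IH] f //= /andP [Hc Hw]; rewrite IH //.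
  by case: c Hc => [|[|[|[|c]]]] //= _; rewrite /mvK /=; first [exact: C1 | exact: C2 | exact: Crho].
have Crep : forall f, exists i : 'I_6, cls f = cls (0, 0, oj (nth 0%N vreps i)).
  case=> [[x y] k].
  case/and4P: (allP vchk_ok k (in108 k)) => /eqP Ek Hi Hr Hw.
  exists (Ordinal Hi).
  rewrite (tr0 x y k) Ctr -(Caw _ _ Hw).
  case Ez: (aw3 _ (0, 0, k)) => [[u v] k'].
  have := pr_aw3 (nth [::] vws k) (0, 0, k); rewrite Ez /pr /= => Hpr.
  rewrite -Hpr /= in Ek.
  rewrite (tr0 u v k') Ctr; congr (cls (_, _, _)); apply: val_inj => /=.
  by rewrite /oj inordK.
rewrite /n_vertex_orbits.
apply: (@leq_trans #|[set cls (0, 0, oj (nth 0%N vreps i)) | i : 'I_6]|).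
  apply: subset_leq_card; apply/subsetP => W /imsetP [V /imsetP [y _ ->] ->].
  have [f <-] := Hs y; have [i Ei] := Crep f.
  by apply/imsetP; exists i => //; rewrite -Ei.
by apply: leq_trans (leq_imset_card _ _) _; rewrite card_ord.
Qed.
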